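(* Let $s_p,s_q\in S$ with $s_p$ to the left of $s_q$. Let $W_p$ be the wedge with apex $s_p$ whose axis points downward to the right making angle $\theta_p$ with the horizontal, and $W_q$ the wedge with apex $s_q$ whose axis points downward to the left making angle $\theta_q$ with the horizontal, where $\theta_p-\alpha>0$, $\theta_q-\alpha>0$ and $\theta_p+\theta_q+2\alpha<\pi$, so that $W_p\cap W_q$ is a convex quadrilateral. Each wedge is bounded by an inner ray (angle $\theta-\alpha$ below the horizontal) and an outer ray (angle $\theta+\alpha$ below the horizontal). Let $v_1$ be the intersection of the two inner rays, $v_3$ the intersection of the two outer rays, $v_2$ the intersection of the outer ray of $W_p$ with the inner ray of $W_q$, and $v_4$ the intersection of the inner ray of $W_p$ with the outer ray of $W_q$; set $\mathrm{diag}_1=|v_1v_3|$ and $\mathrm{diag}_2=|v_2v_4|$. If $\theta_p+\theta_q\ge\frac{\pi}{2}+\alpha$, then $\mathrm{diag}_1>\mathrm{diag}_2$.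
   Context: Work in $\mathbb{R}^2$ with coordinates $(x,z)$; the viewing line is $S=\{z=h\}$, $h>0$. Fix $\alpha>0$. A wedge with apex $s$ and axis unit vector $u$ is $W(s,u)=\{s+rv:\ r\ge0,\ |v|=1,\ \angle(v,u)\le\alpha\}$ (opening angle $2\alpha$). *)

(* Defs.v *)
From Stdlib Require Import Reals Lra.
Open Scope R_scope.

Definition point := (R * R)%type.

Definition pdist (a b : point) : R :=
  sqrt ((fst a - fst b)^2 + (snd a - snd b)^2).

Definition on_ray (s d v : point) : Prop :=
  exists r : R, 0 <= r /\ v = (fst s + r * fst d, snd s + r * snd d).

Definition dir_down_right (phi : R) : point := (cos phi, - sin phi).
Definition dir_down_left (phi : R) : point := (- cos phi, - sin phi).

(* Main.v *)
Require Import Defs.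
From Stdlib Require Import Reals Lra Psatz.
Open Scope R_scope.

Lemma inter a b xp xq h v : 0 < sin a -> 0 < sin b ->
  on_ray (xp, h) (dir_down_right a) v -> on_ray (xq, h) (dir_down_left b) v ->
  exists rho, v = (xp + rho*(cos a/sin a), h - rho) /\
     rho*(cos a/sin a + cos b/sin b) = xq - xp.
Proof.
  intros Ha Hb [r [Hr Ev]] [t [Ht Ev']].
  unfold dir_down_right, dir_down_left in *. simpl in *.
  rewrite Ev in Ev'. injection Ev' as E1 E2.
  exists (r * sin a). split.
  - rewrite Ev. f_equal; field; lra.
  - assert (Et : t = r * sin a / sin b) by (apply (Rmult_eq_reg_r (sin b)); [field_simplify; lra | lra]).
    subst t. transitivity (r*cos a + r*sin a/sin b * cos b); [field; lra | lra].
Qed.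

Lemma cot_lt x y : 0 < x -> x < y -> y < PI -> cos y / sin y < cos x / sin x.
Proof.
  intros. assert (0 < sin x) by (apply sin_gt_0; lra).
  assert (0 < sin y) by (apply sin_gt_0; lra).
  assert (0 < sin (y - x)) by (apply sin_gt_0; lra).
  rewrite sin_minus in H4.
  apply (Rmult_lt_reg_r (sin x * sin y)); [nra|].
  field_simplify; try lra; nra.
Qed.

Lemma cot_sum_pos x y : 0 < x -> 0 < y -> x + y < PI -> 0 < cos x / sin x + cos y / sin y.
Proof.
  intros. assert (0 < sin x) by (apply sin_gt_0; lra).
  assert (0 < sin y) by (apply sin_gt_0; lra).
  assert (0 < sin (x + y)) by (apply sin_gt_0; lra).
  rewrite sin_plus in H4.
  apply (Rmult_lt_reg_r (sin x * sin y)); [nra|].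
  field_simplify; try lra; nra.
Qed.

Lemma cot_prod x y : 0 < x -> 0 < y -> x < PI -> y < PI -> PI/2 <= x + y -> x + y <= 3*(PI/2) ->
   (cos x / sin x) * (cos y / sin y) <= 1.
Proof.
  intros. assert (0 < sin x) by (apply sin_gt_0; lra).
  assert (0 < sin y) by (apply sin_gt_0; lra).
  assert (cos (x + y) <= 0) by (apply cos_le_0; lra).
  rewrite cos_plus in H7.
  apply (Rmult_le_reg_r (sin x * sin y)); [nra|].
  field_simplify; try lra; nra.
Qed.
Lemma poly_key u1 u3 w1 w3 :
  u3 < u1 -> w3 < w1 -> 0 < u3 + w3 -> u1*w3 <= 1 -> u3*w1 <= 1 ->
  ((u3*w3-u1*w1)^2 + ((u3+w1)-(u1+w3))^2) * ((u1+w1)*(u3+w3))^2 <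
  ((u1*w3-u3*w1)^2 + ((u1+w1)-(u3+w3))^2) * ((u3+w1)*(u1+w3))^2.
Proof.
  intros H1 H2 H3 H4 H5.
  assert (E : ((u1*w3-u3*w1)^2 + ((u1+w1)-(u3+w3))^2) * ((u3+w1)*(u1+w3))^2
    - ((u3*w3-u1*w1)^2 + ((u3+w1)-(u1+w3))^2) * ((u1+w1)*(u3+w3))^2
    = (u1-u3)*(w1-w3)*(((u1*w3-u3*w1)^2 + ((u1+w1)-(u3+w3))^2)*((u1+w1)*(u3+w3)+(u1-u3)*(w1-w3)) + (u1+w1)*(u3+w3)*((u3+w1)+(u1+w3))*((1-u3*w1)*(u1+w3) + (1-u1*w3)*(u3+w1)))).
  { ring. }
  set (a := u1 - u3). set (b := w1 - w3).
  set (N1 := (u1*w3-u3*w1)^2 + ((u1+w1)-(u3+w3))^2).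
  set (P := (u1+w1)*(u3+w3)).
  set (K := (u1+u3)*(w1+w3)-4).
  assert (Ha : 0 < a) by (unfold a; lra).
  assert (Hb : 0 < b) by (unfold b; lra).
  assert (HP : 0 < P) by (unfold P; apply Rmult_lt_0_compat; lra).
  assert (HN : 0 < N1).
  { unfold N1. assert (0 < (u1+w1)-(u3+w3)) by lra.
    assert (0 < ((u1+w1)-(u3+w3))^2) by (apply pow_lt; lra).
    assert (0 <= (u1*w3-u3*w1)^2) by apply pow2_ge_0. lra. }
  assert (0 < a*b) by nra.
  assert (0 <= (1-u3*w1)*(u1+w3)) by (apply Rmult_le_pos; lra).
  assert (0 <= (1-u1*w3)*(u3+w1)) by (apply Rmult_le_pos; lra).
  assert (0 <= P*((u3+w1)+(u1+w3))*((1-u3*w1)*(u1+w3) + (1-u1*w3)*(u3+w1))).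
  { apply Rmult_le_pos; [|lra]. apply Rmult_le_pos; lra. }
  assert (0 < N1*(P+a*b)) by (apply Rmult_lt_0_compat; lra).
  assert (0 < a*b*(N1*(P+a*b) + P*((u3+w1)+(u1+w3))*((1-u3*w1)*(u1+w3) + (1-u1*w3)*(u3+w1)))).
  { apply Rmult_lt_0_compat; lra. }
  unfold a, b, N1, P in *. lra.
Qed.
Lemma rho_key u1 u3 w1 w3 d r1 r2 r3 r4 :
  u3 < u1 -> w3 < w1 -> 0 < u3 + w3 -> u1*w3 <= 1 -> u3*w1 <= 1 -> 0 < d ->
  r1*(u1+w1) = d -> r3*(u3+w3) = d -> r2*(u3+w1) = d -> r4*(u1+w3) = d ->
  (r2*u3 - r4*u1)^2 + (r2-r4)^2 < (r1*u1-r3*u3)^2+(r1-r3)^2.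
Proof.
  intros H1 H2 H3 H4 H5 Hd E1 E3 E2 E4.
  assert (s1 : 0 < u1+w1) by lra. assert (s2 : 0 < u3+w1) by lra.
  assert (s4 : 0 < u1+w3) by lra.
  assert (R1 : r1 = d/(u1+w1)) by (rewrite <- E1; field; lra).
  assert (R2 : r2 = d/(u3+w1)) by (rewrite <- E2; field; lra).
  assert (R3 : r3 = d/(u3+w3)) by (rewrite <- E3; field; lra).
  assert (R4 : r4 = d/(u1+w3)) by (rewrite <- E4; field; lra).
  subst r1 r2 r3 r4.
  pose proof (poly_key u1 u3 w1 w3 H1 H2 H3 H4 H5) as K.
  set (Q := (u1+w1)*(u3+w3)*((u3+w1)*(u1+w3))).
  assert (HQ : 0 < Q) by (unfold Q; repeat apply Rmult_lt_0_compat; lra).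
  assert (EA : (d/(u1+w1)*u1 - d/(u3+w3)*u3)^2 + (d/(u1+w1) - d/(u3+w3))^2
     = d^2 * (((u1*w3-u3*w1)^2 + ((u1+w1)-(u3+w3))^2) * ((u3+w1)*(u1+w3))^2) / Q^2).
  { unfold Q. field. lra. }
  assert (EB : (d/(u3+w1)*u3 - d/(u1+w3)*u1)^2 + (d/(u3+w1) - d/(u1+w3))^2
     = d^2 * (((u3*w3-u1*w1)^2 + ((u3+w1)-(u1+w3))^2) * ((u1+w1)*(u3+w3))^2) / Q^2).
  { unfold Q. field. lra. }
  rewrite EA, EB. unfold Rdiv. apply Rmult_lt_compat_r.
  - apply Rinv_0_lt_compat. apply pow_lt. lra.
  - apply Rmult_lt_compat_l; [apply pow_lt; lra| exact K].
Qed.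

Theorem lemma3 (h alpha xp xq thp thq : R) (v1 v2 v3 v4 : point) :
  0 < h -> 0 < alpha -> xp < xq ->
  0 < thp - alpha -> 0 < thq - alpha -> thp + thq + 2 * alpha < PI ->
  on_ray (xp, h) (dir_down_right (thp - alpha)) v1 ->
  on_ray (xq, h) (dir_down_left (thq - alpha)) v1 ->
  on_ray (xp, h) (dir_down_right (thp + alpha)) v3 ->
  on_ray (xq, h) (dir_down_left (thq + alpha)) v3 ->
  on_ray (xp, h) (dir_down_right (thp + alpha)) v2 ->
  on_ray (xq, h) (dir_down_left (thq - alpha)) v2 ->
  on_ray (xp, h) (dir_down_right (thp - alpha)) v4 ->
  on_ray (xq, h) (dir_down_left (thq + alpha)) v4 ->
  thp + thq >= PI / 2 + alpha ->
  pdist v1 v3 > pdist v2 v4.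
Proof.
  intros Hh Hal Hx Hp Hq Hs R1p R1q R3p R3q R2p R2q R4p R4q Hge.
  assert (sa1 : 0 < sin (thp - alpha)) by (apply sin_gt_0; lra).
  assert (sa3 : 0 < sin (thp + alpha)) by (apply sin_gt_0; lra).
  assert (sb1 : 0 < sin (thq - alpha)) by (apply sin_gt_0; lra).
  assert (sb3 : 0 < sin (thq + alpha)) by (apply sin_gt_0; lra).
  destruct (inter _ _ _ _ _ _ sa1 sb1 R1p R1q) as [r1 [E1 F1]].
  destruct (inter _ _ _ _ _ _ sa3 sb1 R2p R2q) as [r2 [E2 F2]].
  destruct (inter _ _ _ _ _ _ sa3 sb3 R3p R3q) as [r3 [E3 F3]].
  destruct (inter _ _ _ _ _ _ sa1 sb3 R4p R4q) as [r4 [E4 F4]].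
  subst v1 v2 v3 v4.
  set (u1 := cos (thp - alpha) / sin (thp - alpha)) in *.
  set (u3 := cos (thp + alpha) / sin (thp + alpha)) in *.
  set (w1 := cos (thq - alpha) / sin (thq - alpha)) in *.
  set (w3 := cos (thq + alpha) / sin (thq + alpha)) in *.
  assert (H1 : u3 < u1) by (apply cot_lt; lra).
  assert (H2 : w3 < w1) by (apply cot_lt; lra).
  assert (H3 : 0 < u3 + w3) by (apply cot_sum_pos; lra).
  assert (H4 : u1 * w3 <= 1) by (apply cot_prod; lra).
  assert (H5 : u3 * w1 <= 1) by (apply cot_prod; lra).
  pose proof (rho_key u1 u3 w1 w3 (xq - xp) r1 r2 r3 r4 H1 H2 H3 H4 H5 ltac:(lra) F1 F3 F2 F4) as K.
  unfold pdist; cbn [fst snd].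
  apply sqrt_lt_1_alt. split.
  - apply Rplus_le_le_0_compat; apply pow2_ge_0.
  - replace ((xp + r2 * u3 - (xp + r4 * u1))^2) with ((r2*u3 - r4*u1)^2) by ring.
    replace ((h - r2 - (h - r4))^2) with ((r2 - r4)^2) by ring.
    replace ((xp + r1 * u1 - (xp + r3 * u3))^2) with ((r1*u1 - r3*u3)^2) by ring.
    replace ((h - r1 - (h - r3))^2) with ((r1 - r3)^2) by ring.
    exact K.
Qed.
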